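(* Let $G=(V,E)$ be an undirected graph, $k$ a positive integer, and $f:V\to\mathbb{Z}\cup\{-\infty\}$, $g:V\to\mathbb{Z}\cup\{+\infty\}$ with $f\le g$. A $k$-edge-connected $(f,g)$-bounded orientation $D$ of $G$ is decreasingly minimal among all $k$-edge-connected $(f,g)$-bounded orientations of $G$ if and only if there are no two nodes $s,t$ for which $\varrho_D(t)\ge\varrho_D(s)+2$, $\varrho_D(t)>f(t)$, $\varrho_D(s)<g(s)$, and $D$ contains $k+1$ arc-disjoint directed paths from $s$ to $t$.
   Context: $\varrho_D(v)$ is the number of arcs with head $v$; $D$ is $(f,g)$-bounded if $f(v)\le\varrho_D(v)\le g(v)$ for all $v$; $D$ is $k$-edge-connected if every non-empty proper subset of $V$ has at least $k$ entering arcs. Decreasingly minimal: in-degree vector with largest component as small as possible within the class, then second largest, etc. *)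

(* Defs.v *)
From mathcomp Require Import all_boot all_order all_algebra.
Set Implicit Arguments. Unset Strict Implicit. Unset Printing Implicit Defensive.
Import Order.TTheory GRing.Theory Num.Theory.

(* An undirected (multi)graph G = (V, E): V, E finite types, [ends e] = the two
   end-nodes of edge e (in an arbitrary reference order).
   An orientation D of G: D e = true orients e from (ends e).1 to (ends e).2,
   D e = false orients it from (ends e).2 to (ends e).1. *)

Section Orient.
Variables (V E : finType) (ends : E -> V * V).

Definition ahead (D : {ffun E -> bool}) (e : E) : V :=
  if D e then (ends e).2 else (ends e).1.
Definition atail (D : {ffun E -> bool}) (e : E) : V :=
  if D e then (ends e).1 else (ends e).2.

Definition indeg (D : {ffun E -> bool}) (v : V) : nat :=
  #|[set e | ahead D e == v]|.

(* f : V -> Z u {-oo}, encoded with None = -oo ;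
   g : V -> Z u {+oo}, encoded with None = +oo. *)
Definition lower_ok (f : V -> option int) (v : V) (n : nat) : bool :=
  if f v is Some a then (a <= n%:Z)%R else true.
Definition upper_ok (g : V -> option int) (v : V) (n : nat) : bool :=
  if g v is Some b then (n%:Z <= b)%R else true.

Definition above_f (f : V -> option int) (v : V) (n : nat) : bool :=
  if f v is Some a then (a < n%:Z)%R else true.
Definition below_g (g : V -> option int) (v : V) (n : nat) : bool :=
  if g v is Some b then (n%:Z < b)%R else true.

Definition f_le_g (f g : V -> option int) : Prop :=
  forall v, match f v, g v with Some a, Some b => (a <= b)%R | _, _ => true end.

Definition fg_bounded (f g : V -> option int) (D : {ffun E -> bool}) : Prop :=
  forall v, lower_ok f v (indeg D v) /\ upper_ok g v (indeg D v).

Definition k_edge_connected (k : nat) (D : {ffun E -> bool}) : Prop :=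
  forall X : {set V}, X != set0 -> X != setT ->
    k <= #|[set e | (ahead D e \in X) && (atail D e \notin X)]|.

Definition feasible (k : nat) (f g : V -> option int) (D : {ffun E -> bool}) : Prop :=
  k_edge_connected k D /\ fg_bounded f g D.

Definition degseq (D : {ffun E -> bool}) : seq nat :=
  sort geq [seq indeg D v | v <- enum V].

Fixpoint lexle (s t : seq nat) : bool :=
  match s, t with
  | [::], _ => true
  | _ :: _, [::] => false
  | x :: s', y :: t' => (x < y) || ((x == y) && lexle s' t')
  end.

Definition decmin (k : nat) (f g : V -> option int) (D : {ffun E -> bool}) : Prop :=
  feasible k f g D /\
  forall D' : {ffun E -> bool}, feasible k f g D' -> lexle (degseq D) (degseq D').

Fixpoint diwalk (D : {ffun E -> bool}) (x t : V) (p : seq E) : bool :=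
  match p with
  | [::] => x == t
  | e :: p' => (atail D e == x) && diwalk D (ahead D e) t p'
  end.

Definition dipath (D : {ffun E -> bool}) (s t : V) (p : seq E) : bool :=
  diwalk D s t p && uniq (s :: map (ahead D) p).

Definition arc_disjoint_paths (D : {ffun E -> bool}) (m : nat) (s t : V) : Prop :=
  exists P : 'I_m -> seq E,
    (forall i, dipath D s t (P i)) /\
    (forall i j, i != j -> forall e, e \in P i -> e \notin P j).

End Orient.

(* Main.v *)
Require Import Defs.
From mathcomp Require Import all_boot all_order all_algebra.
From mathcomp Require Import zify.
Set Implicit Arguments. Unset Strict Implicit. Unset Printing Implicit Defensive.

Section Proofs.
Variables (V E : finType) (ends : E -> V * V).
Local Notation ahead := (ahead ends).
Local Notation atail := (atail ends).
Local Notation indeg := (indeg ends).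
Local Notation diwalk := (diwalk ends).
Local Notation dipath := (dipath ends).
Implicit Types (D : {ffun E -> bool}) (X Y : {set V}).

Definition ent D X :=
  #|[set e | (ahead D e \in X) && (atail D e \notin X)]|.
Definition enters D X e := (ahead D e \in X) && (atail D e \notin X).
Definition leaves D X e := (atail D e \in X) && (ahead D e \notin X).
Definition inner X := #|[set e | ((ends e).1 \in X) && ((ends e).2 \in X)]|.
Definition flip D (S : {set E}) : {ffun E -> bool} :=
  [ffun e => if e \in S then ~~ D e else D e].

Lemma card_sum (T : finType) (P : pred T) : #|[set x | P x]| = \sum_x (P x : nat).
Proof.
rewrite -sum1_card big_mkcond /=; apply: eq_bigr => x _; rewrite inE; by case: (P x).
Qed.

Lemma sum_eq1 (a : V) X : \sum_(v in X) (a == v : nat) = (a \in X).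
Proof.
rewrite big_mkcond (bigD1 a) //= eqxx big1 ?addn0; first by case: (a \in X).
by move=> v /negbTE; rewrite eq_sym => ->; case: (v \in X).
Qed.

Lemma ent_submod D X Y : ent D (X :&: Y) + ent D (X :|: Y) <= ent D X + ent D Y.
Proof.
rewrite /ent !card_sum -!big_split /=; apply: leq_sum => e _; rewrite !inE.
by case: (ahead D e \in X); case: (ahead D e \in Y); case: (atail D e \in X);
  case: (atail D e \in Y).
Qed.

Lemma sum_indeg D X : \sum_(v in X) indeg D v = ent D X + inner X.
Proof.
rewrite /Defs.indeg; under eq_bigr do rewrite card_sum.
rewrite exchange_big /= /ent /inner !card_sum -big_split; apply: eq_bigr => e _.
rewrite sum_eq1 /Defs.ahead /Defs.atail; case: (D e); case: (ends e) => a b /=;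
  by case: (a \in X); case: (b \in X).
Qed.

Lemma ahead_flip D S e : ahead (flip D S) e = if e \in S then atail D e else ahead D e.
Proof. by rewrite /Defs.ahead /Defs.atail ffunE; case: (e \in S); case: (D e). Qed.
Lemma atail_flip D S e : atail (flip D S) e = if e \in S then ahead D e else atail D e.
Proof. by rewrite /Defs.ahead /Defs.atail ffunE; case: (e \in S); case: (D e). Qed.

Lemma ent_flip D S X : ent (flip D S) X + \sum_(e in S) enters D X e
  = ent D X + \sum_(e in S) leaves D X e.
Proof.
rewrite /ent !card_sum !(big_mkcond (fun e => e \in S)) -!big_split /=.
apply: eq_bigr => e _; rewrite ahead_flip atail_flip /enters /leaves.
by case: (e \in S); case: (ahead D e \in X); case: (atail D e \in X).
Qed.

Lemma walk_count D x t p X : diwalk D x t p ->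
  count (enters D X) p + (x \in X) = count (leaves D X) p + (t \in X).
Proof.
elim: p x => [|e p IH] x /=; first by move/eqP->.
case/andP=> /eqP <- /IH; rewrite /enters /leaves.
case: (ahead D e \in X); case: (atail D e \in X) => /=; lia.
Qed.

Lemma sum_in_uniq (p : seq E) (Q : pred E) : uniq p ->
  \sum_(e in [set e in p]) (Q e : nat) = count Q p.
Proof.
move=> up; rewrite (eq_bigl (mem p)); last by move=> e; rewrite inE.
rewrite -big_uniq //; elim: p {up} => [|e p IH]; first by rewrite big_nil.
by rewrite big_cons IH.
Qed.

Lemma dipath_uniq D s t p : dipath D s t p -> uniq p.
Proof. by case/andP=> _ /= /andP[_ /map_uniq]. Qed.

Lemma rev_ent D s t p X : dipath D s t p ->
  ent (flip D [set e in p]) X + ((t \in X) && (s \notin X))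
  = ent D X + ((s \in X) && (t \notin X)).
Proof.
move=> dp; have up := dipath_uniq dp; case/andP: dp => dw _.
have := ent_flip D [set e in p] X; rewrite !sum_in_uniq //.
have := walk_count X dw.
case: (s \in X); case: (t \in X) => /=; lia.
Qed.

Lemma indeg_ent D v : indeg D v =
  ent D [set v] + #|[set e | ((ends e).1 == v) && ((ends e).2 == v)]|.
Proof.
rewrite /Defs.indeg /ent !card_sum -big_split /=; apply: eq_bigr => e _.
rewrite !inE /Defs.ahead /Defs.atail; case: (D e); case: (ends e) => a b /=;
  by case: (a == v); case: (b == v).
Qed.

Lemma rev_indeg D s t p v : s != t -> dipath D s t p ->
  indeg (flip D [set e in p]) v + (v == t) = indeg D v + (v == s).
Proof.
move=> st dp; rewrite !indeg_ent; have := rev_ent [set v] dp; rewrite !inE.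
rewrite ![_ == v]eq_sym.
have [evt|nvt] := eqVneq v t; have [evs|nvs] := eqVneq v s.
- by move: st; rewrite -evs -evt eqxx.
all: rewrite ?evt ?evs ?eqxx ?(negbTE nvt) ?(negbTE nvs) /=; try lia.

Qed.


Section Reach.
Variables (D : {ffun E -> bool}) (F : {set E}) (s : V).
Definition rrel : rel V :=
  fun u w => [exists e in F, (atail D e == u) && (ahead D e == w)].
Definition reach : {set V} := [set v | connect rrel s v].

Lemma reach_s : s \in reach. Proof. by rewrite inE connect0. Qed.

Lemma reach_closed e : e \in F -> atail D e \in reach -> ahead D e \in reach.
Proof.
rewrite !inE => eF c; apply: (connect_trans c); apply: connect1.
by apply/existsP; exists e; rewrite eF !eqxx.
Qed.

Lemma node_to_arcs x p : path rrel x p ->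
  exists q, [/\ diwalk D x (last x p) q, map (ahead D) q = p & all (mem F) q].
Proof.
elim: p x => [|y p IH] x /=; first by exists [::]; split; rewrite //= eqxx.
case/andP => /existsP [e /andP [eF /andP [/eqP te /eqP he]]] /IH [q [w m a]].
by exists (e :: q) => /=; rewrite te eqxx he w m eF a.
Qed.

Lemma reach_path t : t \in reach -> exists q, dipath D s t q /\ all (mem F) q.
Proof.
rewrite inE => /connectP [p pp ->]; case: (shortenP pp) => p' pp' up _.
have [q [w m a]] := node_to_arcs pp'.
by exists q; rewrite /Defs.dipath w m up.
Qed.
End Reach.

Lemma walk_cross D x t p X : diwalk D x t p -> x \notin X -> t \in X ->
  exists2 e, e \in p & enters D X e.
Proof.
move=> w nx tx; have := walk_count X w; rewrite (negbTE nx) tx addn0 => h.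
have: 0 < count (enters D X) p by lia.
by rewrite -has_count => /hasP [e ep he]; exists e.
Qed.

Lemma paths_cut D j s t X : arc_disjoint_paths ends D j s t ->
  t \in X -> s \notin X -> j <= ent D X.
Proof.
case=> P [dp dj] tX sX.
have: forall i, exists e, e \in P i /\ enters D X e.
  move=> i; case/andP: (dp i) => w _; have [e ep he] := walk_cross w sX tX.
  by exists e.
case/fin_all_exists => h hP.
have inj: injective h.
  move=> i1 i2 eq; apply/eqP; apply/negPn/negP => ne.
  have [h1 _] := hP i1; have [h2 _] := hP i2; rewrite eq in h1.
  by move: (dj _ _ ne _ h1); rewrite h2.
rewrite -[j]card_ord -cardsT -(card_imset _ inj) /ent; apply: subset_leq_card.
by apply/subsetP => e /imsetP [i _ ->]; rewrite inE; case: (hP i).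
Qed.

Lemma ahead_eq D D1 e : D1 e = D e -> ahead D1 e = ahead D e.
Proof. by rewrite /Defs.ahead => ->. Qed.
Lemma atail_eq D D1 e : D1 e = D e -> atail D1 e = atail D e.
Proof. by rewrite /Defs.atail => ->. Qed.
Lemma ahead_neq D D1 e : D1 e != D e -> ahead D1 e = atail D e.
Proof. by rewrite /Defs.ahead /Defs.atail; case: (D1 e); case: (D e). Qed.
Lemma atail_neq D D1 e : D1 e != D e -> atail D1 e = ahead D e.
Proof. by rewrite /Defs.ahead /Defs.atail; case: (D1 e); case: (D e). Qed.

Lemma walk_agree D D1 x t p : (forall e, e \in p -> D1 e = D e) ->
  diwalk D1 x t p = diwalk D x t p.
Proof.
elim: p x => [|e p IH] x //= ag.
rewrite (atail_eq (ag e (mem_head _ _))) (ahead_eq (ag e (mem_head _ _))) IH //.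
by move=> e' e'p; apply: ag; rewrite inE e'p orbT.
Qed.

Lemma dipath_agree D D1 s t p : (forall e, e \in p -> D1 e = D e) ->
  dipath D1 s t p = dipath D s t p.
Proof.
move=> ag; rewrite /Defs.dipath (walk_agree _ _ ag).
have -> : map (ahead D1) p = map (ahead D) p.
  by apply/eq_in_map => e ep; apply: ahead_eq; apply: ag.
by [].
Qed.

Lemma menger1 j : forall D s t, s != t ->
  (forall X, t \in X -> s \notin X -> j <= ent D X) ->
  exists Ds : {ffun E -> bool},
    forall v, indeg Ds v + j * (v == t) = indeg D v + j * (v == s).
Proof.
elim: j => [|j IH] D s t st cut; first by exists D => v; rewrite !mul0n.
have: t \in reach D setT s.
  apply/negPn/negP => nt; set R := reach D setT s.
  have: j.+1 <= ent D (~: R) by apply: cut; rewrite in_setC ?negbK ?reach_s.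
  rewrite /ent => h; have /card_gt0P [e] : 0 < #|[set e | (ahead D e \in ~: R) &&
       (atail D e \notin ~: R)]| by lia.
  rewrite !inE negbK => /andP [/negP h1 h2]; apply: h1.
  by have := @reach_closed D setT s e (in_setT e); rewrite !inE; apply.
case/reach_path => q [dq _].
have cut1 : forall X, t \in X -> s \notin X -> j <= ent (flip D [set e in q]) X.
  move=> X tX sX; have := rev_ent X dq; have := cut X tX sX.
  rewrite tX (negbTE sX) /=; lia.
have [Ds HDs] := IH _ s t st cut1.
exists Ds => v; have := HDs v; have := rev_indeg v st dq; rewrite !mulSn; lia.
Qed.

Definition dsj (p q : seq E) := all (fun e => e \notin q) p.

Lemma menger2 j : forall D (Ds : {ffun E -> bool}) s t, s != t ->
  (forall v, indeg Ds v + j * (v == t) = indeg D v + j * (v == s)) ->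
  exists Ps : seq (seq E), [/\ size Ps = j,
    forall p, p \in Ps -> dipath D s t p /\ (forall e, e \in p -> Ds e != D e)
    & pairwise dsj Ps].
Proof.
elim: j => [|j IH] D Ds s t st H; first by exists [::].
set F := [set e | Ds e != D e].
have tR: t \in reach D F s.
  apply/negPn/negP => nt; set R := reach D F s.
  have: \sum_(v in R) indeg Ds v = \sum_(v in R) indeg D v + j.+1.
    rewrite (bigD1 s) ?reach_s //= [in RHS](bigD1 s) ?reach_s //=.
    have := H s; rewrite eqxx (negbTE st) muln0 muln1 addn0 => Hs.
    rewrite (eq_bigr (fun v => indeg D v)); first by lia.
    move=> v /andP [vR vs]; have := H v; rewrite (negbTE vs).
    have vt : v != t by apply: contraNneq nt => <-.
    by rewrite (negbTE vt) !muln0 !addn0.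
  rewrite !sum_indeg => eq.
  have : ent Ds R <= ent D R.
    apply: subset_leq_card; apply/subsetP => e; rewrite !inE => /andP [hR tR'].
    case: (boolP (Ds e == D e)) => [/eqP ee|ne].
      by rewrite -(ahead_eq ee) -(atail_eq ee) hR tR'.
    rewrite (ahead_neq ne) in hR; rewrite (atail_neq ne) in tR'.
    by move/negP: tR'; case; have := @reach_closed D F s e; rewrite !inE; apply.
  lia.
case/reach_path: tR => q [dq qF].
have H1 : forall v, indeg Ds v + j * (v == t) =
                    indeg (flip D [set e in q]) v + j * (v == s).
  by move=> v; have := H v; have := rev_indeg v st dq; rewrite !mulSn; lia.
have [Ps [sz PP pw]] := IH _ Ds s t st H1.
have agree : forall p, p \in Ps -> forall e, e \in p ->
    flip D [set e in q] e = D e /\ e \notin q.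
  move=> p pPs e ep; have [_ pF] := PP p pPs; have := pF e ep.
  rewrite ffunE inE; case: ifP => eq; last by split; rewrite ?eq.
  have : e \in F := allP qF e eq.
  by rewrite inE; case: (Ds e); case: (D e).
exists (q :: Ps); split => /=; first by rewrite sz.
  move=> p; rewrite inE => /orP [/eqP ->|pPs].
    split; first done.
    by move=> e eq; have : e \in F := allP qF e eq; rewrite inE.
  have [dp pF] := PP p pPs.
  rewrite -(dipath_agree s t (fun e ep => (agree p pPs e ep).1)); split => //.
  by move=> e ep; rewrite -(agree p pPs e ep).1; apply: pF.
rewrite pw andbT; apply/allP => p pPs; apply/allP => e eq; apply/negP => ep.
by have [_ /negP] := agree p pPs e ep.
Qed.

Lemma menger D j s t : s != t ->
  (forall X, t \in X -> s \notin X -> j <= ent D X) ->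
  arc_disjoint_paths ends D j s t.
Proof.
move=> st cut; have [Ds HDs] := menger1 st cut.
have [Ps [sz PP pw]] := menger2 st HDs.
exists (fun i : 'I_j => nth [::] Ps i); split.
  by move=> i; have [] := PP (nth [::] Ps i) => //; rewrite mem_nth // sz.
move=> i i' ne e ei.
have /(pairwiseP [::]) P := pw.
case: (ltngtP i i') => [lt|gt|eq].
- have := P i i'; rewrite !inE sz => /(_ (ltn_ord i) (ltn_ord i') lt) /allP.
  by move/(_ e ei).
- have := P i' i; rewrite !inE sz => /(_ (ltn_ord i') (ltn_ord i) gt) /allP h.
  by apply/negP => /h; rewrite ei.
- by move: ne; rewrite (val_inj eq) eqxx.
Qed.


Lemma sum_split (F : V -> nat) (A : {set V}) :
  \sum_v F v = \sum_(v in A) F v + \sum_(v in ~: A) F v.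
Proof.
rewrite (bigID (mem A)) /=; congr (_ + _); apply: eq_bigl => x; by rewrite ?inE.
Qed.

Lemma sum_total D : \sum_v indeg D v = inner [set: V].
Proof.
have -> : \sum_v indeg D v = \sum_(v in [set: V]) indeg D v.
  by apply: eq_bigl => v; rewrite inE.
rewrite sum_indeg; have -> : ent D [set: V] = 0; last by [].
rewrite /ent; apply/eqP; rewrite cards_eq0; apply/eqP/setP => e.
by rewrite !inE andbF.
Qed.

Section OSE.
Variables (k : nat) (D D' : {ffun E -> bool}) (t : V).
Hypotheses (kD : k_edge_connected ends k D) (kD' : k_edge_connected ends k D').

Definition bad X := [&& t \in X, X != setT & ent D X <= k].

Lemma kent (D0 : {ffun E -> bool}) X : k_edge_connected ends k D0 ->
  t \in X -> X != setT -> k <= ent D0 X.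
Proof.
move=> kc tX XT; apply: kc XT; apply/set0Pn; by exists t.
Qed.

Lemma bad_inter X Y : bad X -> bad Y -> X :|: Y != setT -> bad (X :&: Y).
Proof.
case/and3P => tX XT eX; case/and3P => tY YT eY U.
have := ent_submod D X Y; have := kent kD (_ : t \in X :|: Y) U.
rewrite inE tX => /(_ isT) h1 h2.
rewrite /bad inE tX tY /=; apply/andP; split; last by lia.
apply/negP => /eqP h; move/negP: XT; apply; by rewrite eqEsubset subsetT -h subsetIl.
Qed.

Lemma bad_sum X : bad X -> \sum_(v in X) indeg D v <= \sum_(v in X) indeg D' v.
Proof.
case/and3P => tX XT eX; rewrite !sum_indeg; have := kent kD' tX XT; lia.
Qed.

Definition Ibad := \bigcap_(X | bad X) X.
Definition Bv v := \bigcap_(X | bad X && (v \notin X)) X.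

Lemma B_bad v : v \notin Ibad -> bad (Bv v) /\ v \notin Bv v.
Proof.
move=> vI.
have [X /andP [bX vX]] : exists X, bad X && (v \notin X).
  case: (boolP [exists X, bad X && (v \notin X)]) => [/existsP //|/existsPn h].
  move/negP: vI; case; apply/bigcapP => X bX; by move: (h X); rewrite bX /= negbK.
have sub : Bv v \subset X by apply: bigcap_inf; rewrite bX vX.
have vB : v \notin Bv v by apply: contra vX; apply: (subsetP sub).
have Q : (Bv v == setT) || (bad (Bv v) && (v \notin Bv v)).
  rewrite /Bv; apply: (big_ind (fun Z => (Z == setT) || (bad Z && (v \notin Z)))) => [|Z1 Z2 h1 h2|Z /andP [bZ vZ]].
  - by rewrite eqxx.
  - case/orP: h1 => [/eqP ->|/andP [b1 v1]]; first by rewrite setTI.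
    case/orP: h2 => [/eqP ->|/andP [b2 v2]]; first by rewrite setIT b1 v1 orbT.
    apply/orP; right; rewrite bad_inter //; first by rewrite inE (negbTE v1).
    apply/negP => /eqP U; have : v \in Z1 :|: Z2 by rewrite U inE.
    by rewrite inE (negbTE v1) (negbTE v2).
  - by rewrite bZ vZ orbT.
case/orP: Q => [/eqP BT|/andP[]//]; by move: vB; rewrite BT inE.
Qed.

Lemma I_sub_B v : bad (Bv v) -> Ibad \subset Bv v.
Proof. by move=> b; apply: bigcap_inf. Qed.

Lemma B_eq v w : v \notin Ibad -> w \notin Bv v -> Bv v = Bv w.
Proof.
move=> vI wB; have [bB vB] := B_bad vI.
have sub1 : Bv w \subset Bv v by apply: bigcap_inf; rewrite bB wB.
have wI : w \notin Ibad by apply: contra wB; apply: (subsetP (I_sub_B bB)).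
have [bW wW] := B_bad wI.
have vBw : v \notin Bv w by apply: contra vB; apply: (subsetP sub1).
have sub2 : Bv v \subset Bv w by apply: bigcap_inf; rewrite bW vBw.
by apply/eqP; rewrite eqEsubset sub1 sub2.
Qed.

Lemma ose : indeg D' t < indeg D t ->
  exists s, indeg D s < indeg D' s /\
            forall X, t \in X -> s \notin X -> k < ent D X.
Proof.
move=> lt.
case: (boolP [exists s, (indeg D s < indeg D' s) && (s \in Ibad)]) =>
   [/existsP [s /andP [ls sI]]|none].
  exists s; split => // X tX sX; rewrite ltnNge; apply/negP => eX.
  have bX : bad X.
    by rewrite /bad tX eX andbT; apply/negP => /eqP XT; move: sX; rewrite XT inE.
  by move/bigcapP: sI => /(_ X bX); rewrite (negbTE sX).
exfalso.
have hI : forall v, v \in Ibad -> indeg D' v <= indeg D v.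
  by move=> v vI; move/existsPn: none => /(_ v); rewrite vI andbT -leqNgt.
have tI : t \in Ibad by apply/bigcapP => X /and3P [].
have sI : \sum_(v in Ibad) indeg D' v < \sum_(v in Ibad) indeg D v.
  rewrite (bigD1 t) //= [in X in _ < X](bigD1 t) //=.
  have : \sum_(v in Ibad | v != t) indeg D' v <= \sum_(v in Ibad | v != t) indeg D v.
    by apply: leq_sum => v /andP [vI _]; apply: hI.
  lia.
have sC : \sum_(v in ~: Ibad) indeg D' v <= \sum_(v in ~: Ibad) indeg D v.
  pose P := [set ~: Bv v | v in ~: Ibad].
  have cov : cover P = ~: Ibad.
    apply/setP => w; rewrite cover_imset; apply/bigcupP/idP.
    - case=> v; rewrite !inE => vI wB; apply: contra wB.
      by apply: (subsetP (I_sub_B (B_bad vI).1)).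
    - move=> wI; exists w => //; rewrite inE; move: wI; rewrite inE => wI.
      exact: (B_bad wI).2.
  have triv : trivIset P.
    apply/trivIsetP => A1 A2 /imsetP [v vI ->] /imsetP [u uI ->] ne.
    rewrite -setI_eq0; apply/eqP/setP => w; rewrite !inE.
    apply/negP => /andP [w1 w2]; move/negP: ne; apply.
    rewrite inE in vI; rewrite inE in uI.
    by rewrite (B_eq vI w1) (B_eq uI w2).
  rewrite -cov !big_trivIset //; apply: leq_sum => A /imsetP [v vI ->].
  rewrite inE in vI; have [bB _] := B_bad vI; have := bad_sum bB.
  have := sum_split (indeg D) (Bv v); have := sum_split (indeg D') (Bv v).
  rewrite !sum_total => h1 h2 h3.
  change (\sum_(x in ~: Bv v) indeg D' x <= \sum_(x in ~: Bv v) indeg D x).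
  lia.
have := sum_split (indeg D) Ibad; have := sum_split (indeg D') Ibad.
rewrite !sum_total; lia.
Qed.
End OSE.

Fixpoint ins (x : nat) (s : seq nat) :=
  if s is y :: r then (if y <= x then x :: y :: r else y :: ins x r) else [:: x].

Lemma geq_tr : transitive geq.
Proof. move=> a b c; rewrite /geq /=; lia. Qed.
Lemma geq_an : antisymmetric geq.
Proof. move=> a b; rewrite /geq /= => /andP [h1 h2]; lia. Qed.
Lemma geq_tot : total geq.
Proof. by move=> a b; rewrite /geq /= leq_total. Qed.

Lemma path_ins x y S : path geq y S -> x <= y -> path geq y (ins x S).
Proof.
elim: S y => [|z r IH] y /=; first by move=> _ ->.
case/andP => yz pr xy; case: leqP => zx /=.
  by rewrite xy zx pr.
by rewrite yz IH // ltnW.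
Qed.

Lemma sorted_ins x S : sorted geq S -> sorted geq (ins x S).
Proof.
case: S => [|y r] //= pr; case: leqP => yx /=; first by rewrite yx pr.
by apply: path_ins => //; rewrite ltnW.
Qed.

Lemma perm_ins x S : perm_eq (ins x S) (x :: S).
Proof.
elim: S => [|y r IH] //=; case: leqP => _ //.
apply: (@perm_trans _ (y :: x :: r)); first by rewrite perm_cons.
by rewrite (perm_catCA [:: y] [:: x] r).
Qed.

Lemma sort_cons x l : sort geq (x :: l) = ins x (sort geq l).
Proof.
apply: (sorted_eq geq_tr geq_an); first exact: (sort_sorted geq_tot).
  by apply: sorted_ins; exact: (sort_sorted geq_tot).
rewrite perm_sort perm_sym; apply: (perm_trans (perm_ins _ _)).
by rewrite perm_cons perm_sort.
Qed.

Lemma lexle_refl s : lexle s s.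
Proof. by elim: s => //= x s ->; rewrite eqxx orbT. Qed.

Lemma lexle_trans s1 s2 s3 : lexle s1 s2 -> lexle s2 s3 -> lexle s1 s3.
Proof.
elim: s1 s2 s3 => [|x s IH] [|y t] [|z u] //=.
case/orP => [xy|/andP [/eqP <- h1]]; case/orP => [yz|/andP [/eqP <- h2]].
- by rewrite (ltn_trans xy yz).
- by rewrite xy.
- by rewrite yz.
- by rewrite eqxx (IH _ _ h1 h2) orbT.
Qed.

Lemma ins_head x S : head x S <= x -> ins x S = x :: S.
Proof. by case: S => //= y r ->. Qed.

Lemma head_ins x b r : b <= x -> head x r <= x -> head x (ins b r) <= x.
Proof. by case: r => [|y r] //= bx yx; case: ifP. Qed.

Lemma lex_ins a b S : sorted geq S -> b < a ->
  lexle (ins a.-1 (ins b.+1 S)) (ins a (ins b S)) /\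
  (b.+1 < a -> ~~ lexle (ins a (ins b S)) (ins a.-1 (ins b.+1 S))).
Proof.
move=> + ba; elim: S => [|y r IH] srt.
  rewrite /= (ltnW ba); case: leqP => h /=; split; try move=> ?; lia.
have sr : sorted geq r by move: srt; apply: path_sorted.
case: (ltnP a y) => ay.
  have e1 : ins a (ins b (y :: r)) = y :: ins a (ins b r).
    by rewrite /= leqNgt (ltn_trans ba ay) /= leqNgt ay.
  have e2 : ins a.-1 (ins b.+1 (y :: r)) = y :: ins a.-1 (ins b.+1 r).
    by rewrite /= leqNgt (leq_ltn_trans ba ay) /= leqNgt (leq_ltn_trans (leq_pred a) ay).
  rewrite e1 e2 /= ltnn eqxx /=; exact: IH.
have ew : ins a (ins b (y :: r)) = a :: ins b (y :: r).
  by apply: ins_head; rewrite /=; case: ifP => //= _; apply: ltnW.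
rewrite ew.
case: (ltnP b.+1 a) => ba2; last first.
  have ea : a = b.+1 by lia.
  subst a; have -> : ins b.+1 (y :: r) = b.+1 :: y :: r by rewrite /= ay.
  rewrite /= ltnn /= ltnn eqxx lexle_refl; split => //; by rewrite ltnn.
case: (ltnP y a) => ya.
  have -> : ins a.-1 (ins b.+1 (y :: r)) = a.-1 :: ins b.+1 (y :: r).
    apply: ins_head; rewrite /=; case: ifP => /= _; lia.
  rewrite /=; split; first by apply/orP; left; lia.
  by move=> _; apply/negP => /orP [|/andP [/eqP]]; lia.
have ey : y = a by lia.
subst y.
have e1 : ins b.+1 (a :: r) = a :: ins b.+1 r by rewrite /= leqNgt ba2.
have e2 : ins b (a :: r) = a :: ins b r by rewrite /= leqNgt ba.
rewrite e1 e2 /= (leqNgt a a.-1) (ltn_predL) ?(leq_ltn_trans _ ba) //.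
have hr : head a r <= a.
  by move: srt => /=; case: (r) => //= z r' /andP [].
have ea : a :: ins b r = ins a (ins b r).
  by rewrite [RHS]ins_head //; apply: head_ins => //; apply: ltnW.
have [i1 i2] := IH sr; rewrite !ea /= ltnn eqxx /=; split => // _.
by move: (i2 ba2); rewrite -ea.
Qed.

Lemma lex_move (m m1 : V -> nat) s t : s != t ->
  (forall v, m1 v + (v == t) = m v + (v == s)) -> m s < m t ->
  lexle (sort geq (map m1 (enum V))) (sort geq (map m (enum V))) /\
  (m s + 2 <= m t ->
     ~~ lexle (sort geq (map m (enum V))) (sort geq (map m1 (enum V)))).
Proof.
move=> st H lt.
set r := rem s (rem t (enum V)).
have pe : perm_eq (enum V) (t :: s :: r).
  apply: (perm_trans (perm_to_rem (mem_enum _ t))); rewrite perm_cons.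
  apply: perm_to_rem; rewrite (mem_rem_uniq _ (enum_uniq _)) inE st mem_enum.
  by [].
have er : map m1 r = map m r.
  apply/eq_in_map => v; rewrite /r (mem_rem_uniq _ (rem_uniq _ (enum_uniq _))).
  rewrite inE (mem_rem_uniq _ (enum_uniq _)) inE => /andP [vs /andP [vt _]].
  by have := H v; rewrite (negbTE vs) (negbTE vt) !addn0.
have sortp : forall f : V -> nat, sort geq (map f (enum V)) =
    ins (f t) (ins (f s) (sort geq (map f r))).
  move=> f; rewrite -!sort_cons; apply/(perm_sortP geq_tot geq_tr geq_an).
  by have := perm_map f pe.
rewrite !sortp er.
have -> : m1 t = (m t).-1 by have := H t; rewrite eqxx eq_sym (negbTE st); lia.
have -> : m1 s = (m s).+1 by have := H s; rewrite eqxx (negbTE st); lia.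
have [h1 h2] := lex_ins (sort_sorted geq_tot (map m r)) lt.
by split => // h; apply: h2; lia.
Qed.

End Proofs.

Import Order.TTheory GRing.Theory Num.Theory.

Section Bounds.
Variables (V : finType).
Implicit Types (f g : V -> option int).
Lemma lower_mono f v a b : lower_ok f v a -> a <= b -> lower_ok f v b.
Proof. rewrite /lower_ok; case: (f v) => // x; lia. Qed.
Lemma upper_mono g v a b : upper_ok g v b -> a <= b -> upper_ok g v a.
Proof. rewrite /upper_ok; case: (g v) => // x; lia. Qed.
Lemma above_lower f v a : above_f f v a -> lower_ok f v a.-1.
Proof. rewrite /above_f /lower_ok; case: (f v) => // x; lia. Qed.
Lemma below_upper g v a : below_g g v a -> upper_ok g v a.+1.
Proof. rewrite /below_g /upper_ok; case: (g v) => // x; lia. Qed.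
Lemma lower_above f v a b : lower_ok f v a -> a < b -> above_f f v b.
Proof. rewrite /above_f /lower_ok; case: (f v) => // x; lia. Qed.
Lemma upper_below g v a b : upper_ok g v b -> a < b -> below_g g v a.
Proof. rewrite /below_g /upper_ok; case: (g v) => // x; lia. Qed.
End Bounds.

Lemma sum_lt (T : finType) (F G : T -> nat) s :
  (forall v, F v <= G v) -> F s < G s -> \sum_v F v < \sum_v G v.
Proof.
move=> le lt; rewrite (bigD1 s) //= [X in _ < X](bigD1 s) //=.
have : \sum_(v | v != s) F v <= \sum_(v | v != s) G v by apply: leq_sum.
lia.
Qed.

Lemma flip_kec (V E : finType) (ends : E -> V * V) k D s t P :
  dipath ends D s t P -> k_edge_connected ends k D ->
  (forall X : {set V}, t \in X -> s \notin X -> k < ent ends D X) ->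
  k_edge_connected ends k (flip D [set e in P]).
Proof.
move=> dp kc cut X X0 XT; have := rev_ent X dp; have := kc X X0 XT.
change (k <= ent ends D X -> ent ends (flip D [set e in P]) X +
   (t \in X) && (s \notin X) = ent ends D X + (s \in X) && (t \notin X) ->
   k <= ent ends (flip D [set e in P]) X).
case: (boolP (t \in X)) => tX; case: (boolP (s \in X)) => sX /=; try lia.
have := cut X tX sX; lia.
Qed.

Definition dist (V : finType) (m m' : V -> nat) :=
  \sum_v ((m v - m' v) + (m' v - m v)).

Theorem theorem6p8 (V E : finType) (ends : E -> V * V) (k : nat)
  (f g : V -> option int) (D : {ffun E -> bool}) :
  0 < k -> f_le_g f g -> feasible ends k f g D ->
  (decmin ends k f g D <->
   ~ (exists s t : V,
        [/\ indeg ends D s + 2 <= indeg ends D t,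
            above_f f t (indeg ends D t),
            below_g g s (indeg ends D s)
            & arc_disjoint_paths ends D k.+1 s t])).
Proof.
move=> _ _ [kD bD]; split.
  case=> _ mn [s [t [st2 aft bgs paths]]].
  have st : s != t by apply/eqP => e; rewrite e in st2; lia.
  have [P [dp _]] := paths.
  have hi := fun v => rev_indeg v st (dp ord0).
  have kD1 := flip_kec (dp ord0) kD (fun X tX sX => paths_cut paths tX sX).
  have bD1 : fg_bounded ends f g (flip D [set e in P ord0]).
    move=> v; have := hi v; have [lo up] := bD v.
    have [evt|nvt] := eqVneq v t; have [evs|nvs] := eqVneq v s.
    - by move: st; rewrite -evt -evs eqxx.
    - subst v => h.
      split; [apply: (lower_mono (above_lower aft)) | apply: (upper_mono up)]; lia.
    - subst v => h.
      split; [apply: (lower_mono lo) | apply: (upper_mono (below_upper bgs))]; lia.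
    - by rewrite ?addn0 => ->.
  have := mn _ (conj kD1 bD1).
  have lt0 : indeg ends D s < indeg ends D t by lia.
  have [_ h2] := lex_move st hi lt0.
  by rewrite /degseq; move: (h2 st2) => /negP.
move=> noimp; split; first by [].
have key : forall D', feasible ends k f g D' ->
   (forall D'', feasible ends k f g D'' ->
      dist (indeg ends D) (indeg ends D'') < dist (indeg ends D) (indeg ends D') ->
      lexle (degseq ends D) (degseq ends D'')) ->
   lexle (degseq ends D) (degseq ends D').
  move=> D' [kD' bD'] IH; apply/negPn/negP => nl.
  have [v neq] : exists v, indeg ends D v != indeg ends D' v.
    case: (boolP [exists v, indeg ends D v != indeg ends D' v]) =>
      [/existsP //|/existsPn h].
    case/negP: nl; suff -> : degseq ends D' = degseq ends D by apply: lexle_refl.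
    rewrite /degseq; congr sort; apply: eq_map => v.
    by move: (h v); rewrite negbK => /eqP.
  have [t0 Pt0] : exists t0, indeg ends D' t0 < indeg ends D t0.
    move: neq; rewrite neq_ltn => /orP [lt|]; last by exists v.
    case: (boolP [exists u, indeg ends D' u < indeg ends D u]) =>
      [/existsP //|/existsPn h].
    have hle : forall u, indeg ends D u <= indeg ends D' u.
      by move=> u; move: (h u); rewrite -leqNgt.
    by have := sum_lt hle lt; rewrite !sum_total ltnn.
  case: (@arg_maxnP V t0 (fun v => indeg ends D' v < indeg ends D v)
          (indeg ends D) Pt0) => t Pt tmax.
  have [s [ls cutD]] := ose kD kD' Pt.
  have st : s != t by apply/eqP => e; rewrite e in ls; lia.
  have nimp : ~~ (indeg ends D s + 2 <= indeg ends D t).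
    apply/negP => h; apply: noimp; exists s, t; split => //.
    - exact: (lower_above (bD' t).1 Pt).
    - exact: (upper_below (bD' s).2 ls).
    - exact: (@menger _ _ ends D k.+1 s t st cutD).
  have [t' [lt' cutD']] := ose kD' kD ls.
  have st' : t' != s by apply/eqP => e; rewrite e in lt'; lia.
  have [P [dp _]] := @menger _ _ ends D' k.+1 t' s st' cutD'.
  have hi := fun v => rev_indeg v st' (dp ord0).
  have kD'' := flip_kec (dp ord0) kD' cutD'.
  have bD'' : fg_bounded ends f g (flip D' [set e in P ord0]).
    move=> w; have := hi w; have [lo up] := bD' w; have [loD upD] := bD w.
    have [evt|nvt] := eqVneq w t'; have [evs|nvs] := eqVneq w s.
    - by move: st'; rewrite -evt -evs eqxx.
    - subst w => h.
      split; [apply: (lower_mono lo) | apply: (upper_mono upD)]; lia.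
    - subst w => h.
      split; [apply: (lower_mono loD) | apply: (upper_mono up)]; lia.
    - by rewrite ?addn0 => ->.
  have dl : dist (indeg ends D) (indeg ends (flip D' [set e in P ord0]))
            < dist (indeg ends D) (indeg ends D').
    rewrite /dist; apply: (sum_lt (s := s)).
      move=> u; have := hi u.
      have [evt|nvt] := eqVneq u t'; have [evs|nvs] := eqVneq u s.
      - by move: st'; rewrite -evt -evs eqxx.
      - subst u; lia.
      - subst u; lia.
      - lia.
    have := hi s; rewrite eqxx eq_sym (negbTE st'); lia.
  have lexD'' := IH _ (conj kD'' bD'') dl.
  case: (leqP (indeg ends D' s) (indeg ends D' t')) => c.
    have := tmax t' lt'; lia.
  have [h1 _] := lex_move st' hi c.
  by case/negP: nl; apply: lexle_trans lexD'' h1.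
suff: forall n D', feasible ends k f g D' ->
    dist (indeg ends D) (indeg ends D') <= n -> lexle (degseq ends D) (degseq ends D').
  by move=> H D' fD'; apply: (H _ D' fD' (leqnn _)).
elim=> [|n IH] D' fD' dn; apply: key => // D'' fD'' lt; first by exfalso; lia.
by apply: IH => //; lia.
Qed.
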